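(* Let $h,w\ge 4$ and $G=C_w(U)\sqcap C_h$ where $U=\{i,i+1,i+2\}$ is a set of three consecutive vertices of $C_w$ (indices taken modulo $w$ in $\{1,\dots,w\}$). Then $Z(G)\le h+2$.
   Context: All graphs are finite, simple and undirected. Zero forcing: given a graph $G$ and a set $S\subseteq V(G)$ of initially filled vertices, the color change rule says that if a filled vertex $v$ has exactly one unfilled neighbor $u$, then $v$ forces $u$ to become filled. $S$ is a zero forcing set if repeatedly applying this rule eventually fills every vertex of $G$. The zero forcing number $Z(G)$ is the minimum cardinality of a zero forcing set of $G$. The cycle $C_n$ ($n\ge3$) has vertex set $\{1,\dots,n\}$ and edges $\{k,k+1\}$ for $1\le k\le n-1$ together with $\{n,1\}$. Generalized hierarchical product: for graphs $W,H$ and $U\subseteq V(W)$ (the root set), $W(U)\sqcap H$ is the graph with vertex set $V(W)\times V(H)$ in which $(x_1,y_1)$ and $(x_2,y_2)$ are adjacent iff either ($x_1=x_2\in U$ and $y_1y_2\in E(H)$) or ($y_1=y_2$ and $x_1x_2\in E(W)$). *)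

(* Defs.v *)
From mathcomp Require Import all_boot.
Set Implicit Arguments. Unset Strict Implicit. Unset Printing Implicit Defensive.

(* Cycle C_n on vertex set 'I_n (vertex k here = vertex k+1 of the paper):
   edges {k, k+1 mod n}. *)
Definition cycle_adj (n : nat) : rel 'I_n :=
  fun x y => ((x.+1 %% n) == y) || ((y.+1 %% n) == x).

Definition hier_adj (A B : finType) (adjW : rel A) (U : {set A}) (adjH : rel B)
  : rel (A * B) :=
  fun p q => ((p.1 == q.1) && (p.1 \in U) && adjH p.2 q.2)
             || ((p.2 == q.2) && adjW p.1 q.1).

(* One round of the color change rule, applying every currently valid force
   (equivalent to applying them one at a time: a valid force stays valid until
   its target is filled). *)
Definition force_step (T : finType) (adj : rel T) (S : {set T}) : {set T} :=
  S :|: [set u | [exists v in S, adj v u && (u \notin S) &&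
                  [forall x, (adj v x && (x \notin S)) ==> (x == u)]]].

Definition zero_forcing_set (T : finType) (adj : rel T) (S : {set T}) : bool :=
  iter #|T| (force_step adj) S == [set: T].

Definition zero_forcing_number (T : finType) (adj : rel T) : nat :=
  \big[minn/#|T|]_(S : {set T} | zero_forcing_set adj S) #|S|.

(* Main.v *)
Require Import Defs.
From mathcomp Require Import all_boot.
From mathcomp Require Import zify.
Set Implicit Arguments. Unset Strict Implicit. Unset Printing Implicit Defensive.

Lemma mod2 (k w : nat) : 0 < w -> k < w + w -> k %% w = if k < w then k else k - w.
Proof.
move=> wp kl; case: ifP => kw; first by rewrite modn_small.
have -> : k = (k - w) + w by lia.
by rewrite modnDr modn_small; lia.
Qed.

Ltac modred :=
  repeat match goal with |- context[?k %% ?w] => rewrite (@mod2 k w); [|lia|lia] end;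
  repeat (case: ifP => ?); lia.

Definition cv n (np : 0 < n) k : 'I_n := Ordinal (ltn_pmod k np).

Lemma cv_eq n (np : 0 < n) a b : a %% n = b %% n -> cv np a = cv np b.
Proof. by move=> e; apply: val_inj. Qed.

Lemma cv_val n (np : 0 < n) (x : 'I_n) : cv np x = x.
Proof. by apply: val_inj => /=; rewrite modn_small. Qed.

Lemma cyc_nb n (np : 0 < n) k y :
  cycle_adj (cv np k) y -> y = cv np k.+1 \/ y = cv np (k + n.-1).
Proof.
rewrite /cycle_adj /=; case/orP => /eqP e.
- by left; apply: val_inj => /=; rewrite -e -addn1 modnDml addn1.
- right; apply: val_inj => /=.
  have yl := ltn_ord y.
  transitivity ((y.+1 %% n + n.-1) %% n).
    rewrite modnDml; have -> : y.+1 + n.-1 = y + n by lia.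
    by rewrite modnDr modn_small.
  by rewrite e modnDml.
Qed.

Lemma cyc_S n (np : 0 < n) k : cycle_adj (cv np k) (cv np k.+1).
Proof. by rewrite /cycle_adj /= -addn1 modnDml addn1 eqxx. Qed.

Lemma cyc_P n (np : 0 < n) k : cycle_adj (cv np k) (cv np (k + n.-1)).
Proof.
rewrite /cycle_adj /=; apply/orP; right.
by rewrite -addn1 modnDml -addnA addn1 prednK // modnDr.
Qed.

Lemma iter_fix (T : finType) (f : {set T} -> {set T}) (S : {set T}) :
  (forall A : {set T}, A \subset f A) -> f (iter #|T| f S) = iter #|T| f S.
Proof.
move=> ext.
case: (boolP [exists j : 'I_#|T|.+1, iter j.+1 f S == iter j f S]).
  case/existsP => j /eqP ej.
  have st : forall n, iter (j + n) f S = iter j f S.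
    elim=> [|n IH]; first by rewrite addn0.
    by rewrite addnS /= IH.
  have jl := ltn_ord j.
  have e : #|T| = j + (#|T| - j) by lia.
  rewrite e st; exact: ej.
move=> nex.
have key : forall k, k <= #|T|.+1 -> k <= #|iter k f S|.
  elim=> [|k IH] // kl.
  have ne : iter k.+1 f S != iter k f S.
    apply/negP => /eqP e; move/negP: nex; apply; apply/existsP.
    by exists (Ordinal kl); apply/eqP.
  have pr : iter k f S \proper iter k.+1 f S.
    by rewrite properEneq eq_sym ne ext.
  have := proper_card pr; have := IH (ltnW kl); lia.
have h1 := key _ (leqnn _).
have h2 : #|iter #|T|.+1 f S| <= #|T| by rewrite -cardsT subset_leq_card ?subsetT.
lia.
Qed.

Lemma iter_sub (T : finType) (f : {set T} -> {set T}) (S : {set T}) n :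
  (forall A : {set T}, A \subset f A) -> S \subset iter n f S.
Proof.
move=> ext; elim: n => [|n IH] //=; exact: subset_trans IH (ext _).
Qed.

Lemma close (T : finType) (adj : rel T) X v u :
  force_step adj X = X -> v \in X -> adj v u ->
  (forall x, adj v x -> x != u -> x \in X) -> u \in X.
Proof.
move=> fX vX avu H; rewrite -fX.
case: (boolP (u \in X)) => uX; first by rewrite inE uX.
rewrite inE; apply/orP; right; rewrite inE; apply/existsP; exists v.
rewrite vX avu uX /=; apply/forallP => x; apply/implyP => /andP [ax xn].
by case: eqP => // /eqP xu; rewrite (H x ax xu) in xn.
Qed.

Lemma bigmin_le (I : eqType) (r : seq I) (P : pred I) (F : I -> nat) x0 s :
  s \in r -> P s -> \big[minn/x0]_(i <- r | P i) F i <= F s.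
Proof.
elim: r => // a r IH; rewrite inE big_cons; case/orP => [/eqP <-|sr] Ps.
  by rewrite Ps geq_minl.
case: ifP => _; [exact: leq_trans (geq_minr _ _) (IH sr Ps) | exact: IH].
Qed.

Theorem mainTheorem6 (w h : nat) (hw : 4 <= w) (hh : 4 <= h) (i : 'I_w) :
  let U : {set 'I_w} :=
    [set x : 'I_w | (val x == i %% w) || (val x == i.+1 %% w) || (val x == i.+2 %% w)] in
  zero_forcing_number (hier_adj (@cycle_adj w) U (@cycle_adj h)) <= h + 2.
Proof.
cbv zeta. set U := [set x : 'I_w | _].
have wp : 0 < w by lia.
have hp : 0 < h by lia.
have il := ltn_ord i.
set adj := hier_adj (@cycle_adj w) U (@cycle_adj h).
pose P a b : 'I_w * 'I_h := (cv wp a, cv hp b).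
set S := [set p : 'I_w * 'I_h | p.1 == i] :|: [set P i.+1 0; P i.+1 1].
have cS : #|S| <= h + 2.
  rewrite /S; have -> : [set p : 'I_w * 'I_h | p.1 == i] = setX [set i] [set: 'I_h].
    by apply/setP => -[x y]; rewrite !inE andbT.
  rewrite cardsU cardsX cards1 cardsT card_ord cards2; lia.
have Peq a b a' b' : a %% w = a' %% w -> b %% h = b' %% h -> P a b = P a' b'.
  by move=> e1 e2; rewrite /P (cv_eq wp e1) (cv_eq hp e2).
have nb k b q : adj (P k b) q -> q = P k.+1 b \/ q = P (k + w.-1) b \/
    (cv wp k \in U /\ (q = P k b.+1 \/ q = P k (b + h.-1))).
  case: q => x y; rewrite /adj /hier_adj /=.
  case/orP => [/andP[/andP[/eqP <- inU] /cyc_nb [->|->]] | /andP[/eqP <- /cyc_nb [->|->]]]; by auto.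
have aS k b : adj (P k b) (P k.+1 b).
  by rewrite /adj /hier_adj /= eqxx cyc_S orbT.
have aP k b : adj (P k b) (P (k + w.-1) b).
  by rewrite /adj /hier_adj /= eqxx cyc_P orbT.
have aU k b : cv wp k \in U -> adj (P k b) (P k b.+1).
  by move=> kU; rewrite /adj /hier_adj /= eqxx kU cyc_S.
have zf : zero_forcing_set adj S.
  rewrite /zero_forcing_set.
  set X := iter _ _ _.
  have ext : forall A : {set 'I_w * 'I_h}, A \subset force_step adj A by move=> A; exact: subsetUl.
  have fX : force_step adj X = X by exact: iter_fix.
  have SX : S \subset X by exact: iter_sub.
  have CL := close fX.
  have H1 b : P i b \in X.
    apply: (subsetP SX); rewrite !inE /=; apply/orP; left; apply/eqP.
    by apply: val_inj => /=; rewrite modn_small.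
  have H2a : P i.+1 0 \in X by apply: (subsetP SX); rewrite !inE eqxx orbT.
  have H2b : P i.+1 1 \in X by apply: (subsetP SX); rewrite !inE eqxx !orbT.
  have row b : P i.+1 b \in X -> forall m, m <= w - 2 ->
      P (i + w - m) b \in X /\ P (i + w - m).+1 b \in X.
    move=> Hb; elim=> [|m IH] ml.
      rewrite subn0; split.
        by rewrite (Peq _ _ i b) // modnDr.
      by rewrite (Peq _ _ i.+1 b) // -addSn modnDr.
    have [A B] := IH (ltnW ml).
    have e : (i + w - m.+1).+1 = i + w - m by lia.
    rewrite e; split => //.
    have e2 : P (i + w - m + w.-1) b = P (i + w - m.+1) b.
      apply: Peq => //; have -> : i + w - m + w.-1 = (i + w - m.+1) + w by lia.
      by rewrite modnDr.
    rewrite -e2; apply: (CL (P (i + w - m) b)) => // x ax xu.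
    case: (nb _ _ _ ax) => [->|[xe|[kU xe]]] //.
      by rewrite xe eqxx in xu.
    have m0 : m = 0.
      move: kU; rewrite inE /= (modn_small il) => kU.
      move: kU; case/orP => [/orP [] |] /eqP; modred.
    move: m0 xe => -> [->|->].
      by rewrite subn0 (Peq _ _ i b.+1) // modnDr.
    by rewrite subn0 (Peq _ _ i (b + h.-1)) // modnDr.
  have col y : P i.+1 y \in X /\ P i.+1 y.+1 \in X.
    elim: y => [|y [A B]]; first by split.
    split => //.
    apply: (CL (P i.+1 y.+1)) => //.
      apply: aU; rewrite inE /= eqxx orbT //.
    move=> x ax xu.
    case: (nb _ _ _ ax) => [->|[->|[_ [xe|->]]]].
    - have [R _] := row _ B (w - 2) (leqnn _).
      by rewrite (_ : i + w - (w - 2) = i.+2) in R; last by lia.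
    - rewrite (Peq _ _ i y.+1) //; have -> : i.+1 + w.-1 = i + w by lia.
      by rewrite modnDr.
    - by rewrite xe eqxx in xu.
    - rewrite (Peq _ _ i.+1 y) //.
      have -> : y.+1 + h.-1 = y + h by lia.
      by rewrite modnDr.
  rewrite eqEsubset subsetT /=; apply/subsetP => -[x y] _.
  have -> : (x, y) = P x y by rewrite /P !cv_val.
  case: (boolP (val x == i.+1 %% w)) => xe.
    rewrite (Peq _ _ i.+1 y); first by case: (col y).
      by rewrite (eqP xe) modn_mod.
    by [].
  have xl := ltn_ord x.
  pose m := if x <= i then i - x else i + w - x.
  have ml : m <= w - 2.
    rewrite /m; move: xe; change (val x) with (nat_of_ord x); case: ifP => xi; modred.
  have [R _] := row y (proj1 (col y)) m ml.
  rewrite (Peq _ _ (i + w - m) y) //.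
  rewrite /m; case: ifP => xi; modred.
rewrite /zero_forcing_number.
have hb := @bigmin_le _ (index_enum {set 'I_w * 'I_h}) (zero_forcing_set adj)
  (fun S => #|S|) #|{: 'I_w * 'I_h}| S (mem_index_enum S) zf.
exact: leq_trans hb cS.
Qed.
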